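(* Let $p\ge1$ and let $\mathcal A=(A_n)_{n\ge0}$ be a sequence of positive invertible $p\times p$ matrices with $\sup_n\|A_n\|<\infty$ such that the matrix-valued weighted shift $W_{\mathcal A}$ on $\ell^2(\mathbb C^p)$ is quadratically hyponormal. If $A_n=A_{n+1}$ for some $n\ge1$, then either $A_{n-1}=A_n=A_{n+1}$ or $A_n=A_{n+1}=A_{n+2}$.
   Context: $\ell^2(\mathbb C^p)=\{(x_n)_{n\ge0}: x_n\in\mathbb C^p,\ \sum_n\|x_n\|^2<\infty\}$; the matrix-valued weighted shift is $W_{\mathcal A}(x_0,x_1,\dots)=(0,A_0x_0,A_1x_1,\dots)$. A bounded operator $T$ is hyponormal if $T^*T-TT^*\ge0$, and quadratically hyponormal if $T+\lambda T^2$ is hyponormal for every $\lambda\in\mathbb C$. *)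

(* Defs.v *)
From HB Require Import structures.
From mathcomp Require Import all_boot all_order all_algebra.
From mathcomp Require Import complex.
From mathcomp Require Import all_classical all_reals all_analysis.
Import numFieldNormedType.Exports.
Set Implicit Arguments. Unset Strict Implicit. Unset Printing Implicit Defensive.
Import Order.TTheory GRing.Theory Num.Theory.
Local Open Scope ring_scope.

Definition cvec (R : realType) (p : nat) := 'cV[R[i]]_p.
Definition cseq (R : realType) (p : nat) := nat -> 'cV[R[i]]_p.

Definition adjmx (R : realType) m n (A : 'M[R[i]]_(m, n)) : 'M[R[i]]_(n, m) :=
  \matrix_(i, j) (A j i)^*%C.

Definition vinner (R : realType) p (u v : 'cV[R[i]]_p) : R[i] :=
  \sum_(k < p) u k 0 * (v k 0)^*%C.

Definition vsqnorm (R : realType) p (u : 'cV[R[i]]_p) : R :=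
  \sum_(k < p) (complex.Re (u k 0) ^+ 2 + complex.Im (u k 0) ^+ 2).

Definition in_l2 (R : realType) p (x : cseq R p) : Prop :=
  cvgn (series (fun n => vsqnorm (x n))).

Definition l2inner (R : realType) p (x y : cseq R p) : R[i] :=
  Complex (limn (series (fun n => complex.Re (vinner (x n) (y n)))))
          (limn (series (fun n => complex.Im (vinner (x n) (y n))))).

Definition is_adjoint (R : realType) p (T S : cseq R p -> cseq R p) : Prop :=
  (forall x, in_l2 x -> in_l2 (S x)) /\
  forall x y, in_l2 x -> in_l2 y -> l2inner (T x) y = l2inner x (S y).

Definition hyponormal (R : realType) p (T : cseq R p -> cseq R p) : Prop :=
  exists S, is_adjoint T S /\
    forall x, in_l2 x ->
      0 <= l2inner (fun n => S (T x) n - T (S x) n) x.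

Definition quad_hyponormal (R : realType) p (T : cseq R p -> cseq R p) : Prop :=
  forall lam : R[i], hyponormal (fun x n => T x n + lam *: T (T x) n).

Definition mw_shift (R : realType) p (A : nat -> 'M[R[i]]_p) (x : cseq R p) : cseq R p :=
  fun n => if n is m.+1 then A m *m x m else 0.

Definition posmx (R : realType) p (A : 'M[R[i]]_p) : Prop :=
  adjmx A = A /\ forall v : 'cV[R[i]]_p, 0 <= vinner (A *m v) v.

Definition bounded_seq_mx (R : realType) p (A : nat -> 'M[R[i]]_p) : Prop :=
  exists M : R, forall n (v : 'cV[R[i]]_p), vsqnorm (A n *m v) <= M ^+ 2 * vsqnorm v.

(* Main.v *)
Require Import Defs.
From HB Require Import structures.
From mathcomp Require Import all_boot all_order all_algebra.
From mathcomp Require Import complex.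
From mathcomp Require Import all_classical all_reals all_analysis.
From mathcomp Require Import ring lra zify.
Import numFieldNormedType.Exports.
Import Order.TTheory GRing.Theory Num.Theory.
Local Open Scope ring_scope.

Module Aux.
Local Open Scope ring_scope.
Local Open Scope complex_scope.
Set Implicit Arguments. Unset Strict Implicit.

Section Vin.
Variables (R : realType) (p : nat).
Implicit Types (u v w : 'cV[R[i]]_p).

Lemma vinnerDl u v w : vinner (u + v) w = vinner u w + vinner v w.
Proof. by rewrite /vinner -big_split; apply: eq_bigr => k _; rewrite mxE mulrDl. Qed.

Lemma vinnerDr u v w : vinner u (v + w) = vinner u v + vinner u w.
Proof. by rewrite /vinner -big_split; apply: eq_bigr => k _; rewrite mxE rmorphD mulrDr. Qed.

Lemma vinnerZl (a : R[i]) u v : vinner (a *: u) v = a * vinner u v.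
Proof. by rewrite /vinner mulr_sumr; apply: eq_bigr => k _; rewrite mxE mulrA. Qed.

Lemma vinnerZr (a : R[i]) u v : vinner u (a *: v) = conjc a * vinner u v.
Proof. by rewrite /vinner mulr_sumr; apply: eq_bigr => k _; rewrite mxE rmorphM mulrCA. Qed.

Lemma vinner0l v : vinner 0 v = 0.
Proof. by rewrite /vinner big1 // => k _; rewrite mxE mul0r. Qed.

Lemma vinner0r v : vinner v 0 = 0.
Proof. by rewrite /vinner big1 // => k _; rewrite mxE rmorph0 mulr0. Qed.

Lemma vinnerNl u v : vinner (- u) v = - vinner u v.
Proof. by rewrite -scaleN1r vinnerZl mulN1r. Qed.

Lemma vinnerNr u v : vinner u (- v) = - vinner u v.
Proof. by rewrite -scaleN1r vinnerZr rmorphN rmorph1 mulN1r. Qed.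

Lemma vinnerBl u v w : vinner (u - v) w = vinner u w - vinner v w.
Proof. by rewrite vinnerDl vinnerNl. Qed.

Lemma vinnerBr u v w : vinner u (v - w) = vinner u v - vinner u w.
Proof. by rewrite vinnerDr vinnerNr. Qed.

Lemma vinner_conj u v : conjc (vinner u v) = vinner v u.
Proof.
rewrite /vinner rmorph_sum; apply: eq_bigr => k _.
by rewrite rmorphM /= conjcK mulrC.
Qed.

Lemma vinner_mulmx (M : 'M[R[i]]_p) u v :
  vinner (M *m u) v = vinner u (adjmx M *m v).
Proof.
rewrite /vinner.
under eq_bigr do rewrite mxE big_distrl /=.
rewrite exchange_big /=; apply: eq_bigr => j _.
rewrite mxE rmorph_sum mulr_sumr; apply: eq_bigr => k _.
by rewrite !mxE rmorphM /= conjcK mulrCA mulrA.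
Qed.

Lemma vinner_herm (M : 'M[R[i]]_p) u v : adjmx M = M ->
  vinner (M *m u) v = vinner u (M *m v).
Proof. by move=> h; rewrite vinner_mulmx h. Qed.

Lemma vinner_sq u : vinner u u = (vsqnorm u)%:C.
Proof.
rewrite /vinner /vsqnorm rmorph_sum; apply: eq_bigr => k _.
case: (u k 0) => a b /=.
by apply/eqP; rewrite eq_complex /= ; apply/andP; split; apply/eqP; ring.
Qed.

Lemma vsqnorm_ge0 u : 0 <= vsqnorm u.
Proof. by apply: sumr_ge0 => k _; apply: addr_ge0; apply: sqr_ge0. Qed.

Lemma vsqnorm_eq0 u : vsqnorm u = 0 -> u = 0.
Proof.
move=> /eqP; rewrite /vsqnorm psumr_eq0; last first.
  by move=> k _; apply: addr_ge0; apply: sqr_ge0.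
move=> /allP h; apply/matrixP => k j; rewrite (ord1 j) mxE.
have := h k (mem_index_enum _); rewrite paddr_eq0 ?sqr_ge0 // !sqrf_eq0.
by case: (u k 0) => a b /= /andP[/eqP -> /eqP ->].
Qed.

End Vin.

Section Shift.
Variables (R : realType) (p : nat) (A : nat -> 'M[R[i]]_p).
Hypothesis Aherm : forall k, adjmx (A k) = A k.
Implicit Types (u v w x b c : cseq R p).

Definition ip N u v : R[i] := \sum_(k < N) vinner (u k) (v k).
Definition Sb0 x : cseq R p := fun k => A k *m x k.+1.
Local Notation T := (mw_shift A).
Definition Tl (lam : R[i]) x : cseq R p := fun n => T x n + lam *: T (T x) n.
Definition Sl (lam : R[i]) x : cseq R p :=
  fun k => A k *m x k.+1 + conjc lam *: (A k *m (A k.+1 *m x k.+2)).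
Definition supp N x := forall k, (N <= k)%N -> x k = 0.

Lemma ipDl N u v w : ip N (fun k => u k + v k) w = ip N u w + ip N v w.
Proof. by rewrite /ip -big_split; apply: eq_bigr => k _; rewrite vinnerDl. Qed.
Lemma ipBl N u v w : ip N (fun k => u k - v k) w = ip N u w - ip N v w.
Proof. by rewrite /ip -sumrB; apply: eq_bigr => k _; rewrite vinnerBl. Qed.
Lemma ipZl N a u w : ip N (fun k => a *: u k) w = a * ip N u w.
Proof. by rewrite /ip mulr_sumr; apply: eq_bigr => k _; rewrite vinnerZl. Qed.
Lemma ipDr N u v w : ip N w (fun k => u k + v k) = ip N w u + ip N w v.
Proof. by rewrite /ip -big_split; apply: eq_bigr => k _; rewrite vinnerDr. Qed.
Lemma ipZr N a u w : ip N w (fun k => a *: u k) = conjc a * ip N w u.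
Proof. by rewrite /ip mulr_sumr; apply: eq_bigr => k _; rewrite vinnerZr. Qed.

Lemma ip_extr N M u v : supp N v -> (N <= M)%N -> ip M u v = ip N u v.
Proof.
move=> sv NM; rewrite /ip (big_ord_widen M (fun k => vinner (u k) (v k)) NM).
rewrite [RHS]big_mkcond /=; apply: eq_bigr => k _.
by case: ltnP => // Nk; rewrite sv // vinner0r.
Qed.

Lemma ip_extl N M u v : supp N u -> (N <= M)%N -> ip M u v = ip N u v.
Proof.
move=> sv NM; rewrite /ip (big_ord_widen M (fun k => vinner (u k) (v k)) NM).
rewrite [RHS]big_mkcond /=; apply: eq_bigr => k _.
by case: ltnP => // Nk; rewrite sv // vinner0l.
Qed.

Lemma ipS1 N b x : ip N (Sb0 b) x = ip N.+1 b (T x).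
Proof.
rewrite /ip big_ord_recl /= vinner0r add0r; apply: eq_bigr => k _ /=.
by rewrite /Sb0 vinner_herm.
Qed.

Lemma ipT1 N c x : ip N.+1 (T c) x = ip N c (Sb0 x).
Proof.
rewrite /ip big_ord_recl /= vinner0l add0r; apply: eq_bigr => k _ /=.
by rewrite /Sb0 vinner_herm.
Qed.

Lemma supp_T N x : supp N x -> supp N.+1 (T x).
Proof. by move=> s [|k] //= Hk; rewrite s // mulmx0. Qed.

Lemma supp_Sb0 N x : supp N.+1 x -> supp N (Sb0 x).
Proof. by move=> s k Hk; rewrite /Sb0 s // mulmx0. Qed.

Lemma ip_Sl N lam b x : supp N x ->
  ip N (Sl lam b) x = ip N.+2 b (Tl lam x).
Proof.
move=> sx.
have -> : Sl lam b = (fun k => Sb0 b k + conjc lam *: Sb0 (Sb0 b) k) by [].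
rewrite ipDl ipZl ipS1 ipS1 ipS1 /Tl ipDr ipZr.
by rewrite (@ip_extr N.+1 N.+2 b (T x)) //; apply: supp_T.
Qed.

Lemma ip_Tl N lam c x : supp N.+2 x ->
  ip N.+2 (Tl lam c) x = ip N.+2 c (Sl lam x).
Proof.
move=> sx.
rewrite /Tl ipDl ipZl !ipT1.
have -> : Sl lam x = (fun k => Sb0 x k + conjc lam *: Sb0 (Sb0 x) k) by [].
rewrite ipDr ipZr conjcK.
rewrite (@ip_extr N.+1 N.+2 c (Sb0 x)) //; last exact: supp_Sb0.
rewrite (@ip_extr N N.+2 c (Sb0 (Sb0 x)) (supp_Sb0 (supp_Sb0 sx))) //. by do 2 apply: leqW.
Qed.

Lemma ip_main N lam x : supp N.+2 x ->
  ip N.+2 (fun n => Sl lam (Tl lam x) n - Tl lam (Sl lam x) n) x =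
  ip N.+4 (Tl lam x) (Tl lam x) - ip N.+2 (Sl lam x) (Sl lam x).
Proof. by move=> sx; rewrite ipBl (ip_Sl _ _ sx) (ip_Tl _ _ sx). Qed.

End Shift.

Section Ana.
Local Open Scope classical_set_scope.
Variables (R : realType) (p : nat).

Lemma series_fin (f : nat -> R) N : (forall k, (N <= k)%N -> f k = 0) ->
  limn (series f) = \sum_(k < N) f k /\ cvgn (series f).
Proof.
move=> hf.
have h : \forall n \near \oo, series f n = \sum_(k < N) f k.
  exists N => // n /= Nn; rewrite /series /= big_mkord.
  rewrite (big_ord_widen n f Nn) [RHS]big_mkcond /=; apply: eq_bigr => k _.
  by case: ltnP => // Nk; rewrite hf.
split; first exact: lim_near_cst.
exact: (is_cvg_near_cst (\sum_(k < N) f k)).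
Qed.

Lemma l2_fin (x : cseq R p) N : supp N x -> in_l2 x.
Proof.
move=> sx; rewrite /in_l2.
suff hf : forall k, (N <= k)%N -> vsqnorm (x k) = 0 by have [] := series_fin hf.
move=> k Nk; rewrite sx //; rewrite /vsqnorm big1 // => j _; rewrite mxE /=; lra.
Qed.

Lemma Re_sum N (f : nat -> R[i]) : complex.Re (\sum_(k < N) f k) = \sum_(k < N) complex.Re (f k).
Proof. elim/big_rec2: _ => [//|i a b _ <-]; by case: (f i) => ? ?; case: b. Qed.
Lemma Im_sum N (f : nat -> R[i]) : complex.Im (\sum_(k < N) f k) = \sum_(k < N) complex.Im (f k).
Proof. elim/big_rec2: _ => [//|i a b _ <-]; by case: (f i) => ? ?; case: b. Qed.

Lemma l2inner_fin (u x : cseq R p) N :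
  (forall k, (N <= k)%N -> vinner (u k) (x k) = 0) -> l2inner u x = ip N u x.
Proof.
move=> h; rewrite /l2inner.
have [-> _] := series_fin (f := fun k => complex.Re (vinner (u k) (x k))) (N := N)
  (fun k Nk => congr1 _ (h k Nk)).
have [-> _] := series_fin (f := fun k => complex.Im (vinner (u k) (x k))) (N := N)
  (fun k Nk => congr1 _ (h k Nk)).
by rewrite /ip -(Re_sum N (fun k => vinner (u k) (x k))) -(Im_sum N (fun k => vinner (u k) (x k))); case: (\sum_(k < N) _).
Qed.

End Ana.

Section Adj.
Variables (R : realType) (p : nat) (A : nat -> 'M[R[i]]_p).
Hypothesis Aherm : forall k, adjmx (A k) = A k.

Lemma vinner_ext (X Y : 'cV[R[i]]_p) : (forall c, vinner c X = vinner c Y) -> X = Y.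
Proof.
move=> h; apply/eqP; rewrite -subr_eq0; apply/eqP; apply: vsqnorm_eq0.
apply: complexI; rewrite -vinner_sq vinnerBr h subrr; by [].
Qed.

Lemma supp_Tl N lam (x : cseq R p) : supp N x -> supp N.+2 (Tl A lam x).
Proof.
move=> sx k Hk; rewrite /Tl (supp_T A (supp_T A sx)) ?(supp_T A sx) ?scaler0 ?addr0 //.
exact: ltnW.
Qed.

Lemma ip_delta k (c : 'cV[R[i]]_p) (w : cseq R p) :
  ip k.+1 (fun j => if j == k then c else 0) w = vinner c (w k).
Proof.
rewrite /ip big_ord_recr /= eqxx big1 ?add0r // => j _.
by rewrite ifN ?vinner0l // neq_ltn ltn_ord.
Qed.

Lemma adj_formula lam S : is_adjoint (Tl A lam) S ->
  forall N b, supp N b -> forall k, S b k = Sl A lam b k.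
Proof.
move=> [_ Hadj] N b sb k; symmetry; apply: vinner_ext => c.
pose a : cseq R p := fun j => if j == k then c else 0.
have sa : supp k.+1 a by move=> j Hj; rewrite /a ifN // neq_ltn Hj orbT.
have := Hadj a b (l2_fin sa) (l2_fin sb).
rewrite (@l2inner_fin _ _ a (S b) k.+1); last by move=> j Hj; rewrite sa // vinner0l.
rewrite ip_delta => <-.
rewrite (@l2inner_fin _ _ _ _ (N + k).+3); last first.
  move=> j Hj; rewrite (supp_Tl lam sa) ?vinner0l //; lia.
rewrite (ip_Tl Aherm) ; last by move=> j Hj; rewrite sb //; lia.
rewrite (@ip_extl _ _ k.+1) //; first by rewrite ip_delta.
lia.
Qed.

Lemma hypo_ineq lam : hyponormal (Tl A lam) -> forall N (x : cseq R p), supp N.+2 x ->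
  0 <= ip N.+4 (Tl A lam x) (Tl A lam x) - ip N.+2 (Sl A lam x) (Sl A lam x).
Proof.
move=> [S [adj pos]] N x sx.
have := pos x (l2_fin sx).
rewrite (@l2inner_fin _ _ _ _ N.+2); last by move=> k Hk; rewrite sx // vinner0r.
have e1 : S x = Sl A lam x by apply: funext => k; exact: (adj_formula adj sx).
have e2 : S (Tl A lam x) = Sl A lam (Tl A lam x).
  by apply: funext => k; exact: (adj_formula adj (supp_Tl lam sx)).
by rewrite e1 e2 (ip_main Aherm).
Qed.

End Adj.

Section Sq.
Variables (R : realType) (p : nat).

Lemma ge0_realC (z : R[i]) : 0 <= z -> z = (complex.Re z)%:C /\ 0 <= complex.Re z.
Proof.
move=> hz; have := ger0_Im hz; move: hz; rewrite lecE /=.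
by case: z => a b /= /andP[_ ha] ->.
Qed.

Lemma real_quad (q c : R) : 0 <= c -> (forall t : R, 0 <= 2 * t * q + t ^+ 2 * c) -> q = 0.
Proof.
move=> c0 h; have := h (- q / (c + 1)).
set t := - q / (c + 1).
have ht : t * (c + 1) = - q by rewrite /t mulfVK // gt_eqF // ltr_wpDl.
move=> H.
have H2 : 0 <= (c + 1) ^+ 2 * (2 * t * q + t ^+ 2 * c) by apply: mulr_ge0 => //; apply: sqr_ge0.
have E : (c + 1) ^+ 2 * (2 * t * q + t ^+ 2 * c) = - (q ^+ 2 * (c + 2)).
  have -> : (c + 1) ^+ 2 * (2 * t * q + t ^+ 2 * c) = 2 * q * (t * (c + 1)) * (c + 1) + (t * (c + 1)) ^+ 2 * c by ring.
  rewrite ht; ring.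
rewrite E oppr_ge0 in H2.
have : q ^+ 2 * (c + 2) == 0.
  by rewrite eq_le H2 mulr_ge0 ?sqr_ge0 // addr_ge0.
by rewrite mulf_eq0 sqrf_eq0 (gt_eqF (ltr_wpDl c0 _)) ?orbF ?ltr0n // => /eqP.
Qed.

Lemma psd_zero (P : 'M[R[i]]_p) : posmx P -> forall w, vinner (P *m w) w = 0 -> P *m w = 0.
Proof.
move=> [herm pos] w h0; set u := P *m w.
have key : forall t : R, 0 <= 2 * t * vsqnorm u + t ^+ 2 * complex.Re (vinner (P *m u) u).
  move=> t; have := pos (w + t%:C *: u).
  rewrite mulmxDr -scalemxAr !(vinnerDl, vinnerDr, vinnerZl, vinnerZr) h0.
  rewrite (@vinner_herm _ _ _ u w herm) -/u.
  have [-> _] := ge0_realC (pos u).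
  rewrite vinner_sq conjc_real -!rmorphM -!rmorphD /= ler0c.
  set q := vsqnorm u; set c := complex.Re _.
  by have -> : 2 * t * q + t ^+ 2 * c = 0 + t * q + (t * q + t * (t * c)) by ring.
have := real_quad (ge0_realC (pos u)).2 key.
by move/vsqnorm_eq0.
Qed.

End Sq.

Section Sq2.
Variables (R : realType) (p : nat).

Lemma trace_form (Q X : 'M[R[i]]_p) :
  \sum_(j < p) vinner (Q *m delta_mx j 0) (X *m delta_mx j 0) = \tr (adjmx X *m Q).
Proof.
rewrite /mxtrace; apply: eq_bigr => j _; rewrite /vinner mxE; apply: eq_bigr => k _.
by rewrite -!colE !mxE mulrC.
Qed.

Lemma adjmxB (K B : 'M[R[i]]_p) : adjmx (K - B) = adjmx K - adjmx B.
Proof. by apply/matrixP => i j; rewrite !mxE rmorphB. Qed.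

Lemma sq_uniq (K B : 'M[R[i]]_p) : posmx K -> posmx B -> B \in unitmx ->
  K *m K = B *m B -> K = B.
Proof.
move=> [hK pK] [hB pB] uB e.
set X := K - B.
have hX : adjmx X = X by rewrite /X adjmxB hK hB.
have eKX : K *m X = - (X *m B).
  by rewrite /X mulmxBr mulmxBl e opprB.
pose w (j : 'I_p) : 'cV[R[i]]_p := X *m delta_mx j 0.
have sK : \sum_(j < p) vinner (K *m w j) (w j) = \tr (X *m (K *m X)).
  by rewrite /w; under eq_bigr do rewrite mulmxA; rewrite trace_form hX.
have sB : \sum_(j < p) vinner (B *m w j) (w j) = \tr (X *m (B *m X)).
  by rewrite /w; under eq_bigr do rewrite mulmxA; rewrite trace_form hX.
have s0 : \sum_(j < p) vinner (K *m w j) (w j) + \sum_(j < p) vinner (B *m w j) (w j) = 0.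
  rewrite sK sB eKX mulmxN.
  have -> : \tr (X *m (B *m X)) = \tr (X *m (X *m B)) by rewrite mulmxA mxtrace_mulC.
  by rewrite (raddfN (@mxtrace _ p)) addNr.
move/eqP: s0; rewrite paddr_eq0; try by apply: sumr_ge0 => j _.
move=> /andP[_]; rewrite psumr_eq0; last by move=> j _.
move=> /allP hall.
have wj : forall j, w j = 0.
  move=> j; have /eqP h := hall j (mem_index_enum _).
  have := psd_zero (conj hB pB) h.
  by move=> h2; rewrite -(mulKmx uB (w j)) h2 mulmx0.
have X0 : X = 0.
  apply/matrixP => i j; have := wj j; rewrite /w -colE => /matrixP /(_ i 0).
  by rewrite !mxE.
by apply/eqP; rewrite -subr_eq0 -/X X0.
Qed.

Lemma mx_ext (P Q : 'M[R[i]]_p) : (forall Y : 'cV[R[i]]_p, P *m Y = Q *m Y) -> P = Q.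
Proof.
move=> h; apply/matrixP => i j; have := h (delta_mx j 0); rewrite -!colE.
by move=> /matrixP /(_ i 0); rewrite !mxE.
Qed.

End Sq2.

Section Win.
Variables (R : realType) (p : nat) (A : nat -> 'M[R[i]]_p).
Hypothesis Aherm : forall k, adjmx (A k) = A k.
Local Notation T := (mw_shift A).

Definition xs (m : nat) (s : seq 'cV[R[i]]_p) : cseq R p :=
  fun k => if (k < m)%N then 0 else nth 0 s (k - m).

Lemma xs_at m s i : xs m s (m + i)%N = nth 0 s i.
Proof. by rewrite /xs ltnNge leq_addr /= addKn. Qed.

Lemma xs_low m s k : (k < m)%N -> xs m s k = 0.
Proof. by rewrite /xs => ->. Qed.

Lemma xs_supp m s : supp (m + size s)%N (xs m s).
Proof.
move=> k Hk; rewrite /xs ltnNge (_ : (m <= k)%N) /=; last lia.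
by rewrite nth_default //; lia.
Qed.

Lemma T_low m (f : cseq R p) : (forall k, (k < m)%N -> f k = 0) ->
  forall k, (k <= m)%N -> T f k = 0.
Proof. by move=> h [|k] //= Hk; rewrite h // mulmx0. Qed.

Lemma T_at m (f : cseq R p) i : T f (m + i.+1)%N = A (m + i)%N *m f (m + i)%N.
Proof. by rewrite addnS. Qed.

Lemma ip_win m j (u v : cseq R p) :
  ip (m + j)%N u v = ip m u v + \sum_(i < j) vinner (u (m + i)%N) (v (m + i)%N).
Proof. by rewrite /ip big_split_ord. Qed.

Lemma Tl0 m lam s : Tl A lam (xs m s) (m + 0)%N = 0.
Proof.
have h1 := @xs_low m s.
have h2 := T_low h1.
have h3 : forall k, (k < m)%N -> T (xs m s) k = 0 by move=> k Hk; apply: h2; exact: ltnW.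
by rewrite addn0 /Tl (h2 _ (leqnn m)) (T_low h3 (leqnn m)) scaler0 addr0.
Qed.

Lemma Tl1 m lam s : Tl A lam (xs m s) (m + 1)%N = A (m + 0)%N *m nth 0 s 0.
Proof.
rewrite /Tl T_at T_at xs_at addn0 (T_low (@xs_low m s) (leqnn m)).
by rewrite mulmx0 scaler0 addr0.
Qed.

Lemma Tl2 m lam s j : Tl A lam (xs m s) (m + j.+2)%N =
  A (m + j.+1)%N *m nth 0 s j.+1 + lam *: (A (m + j.+1)%N *m (A (m + j)%N *m nth 0 s j)).
Proof. by rewrite /Tl T_at T_at T_at !xs_at. Qed.

Lemma Sl_at m lam s j : Sl A lam (xs m s) (m + j)%N =
  A (m + j)%N *m nth 0 s j.+1 + conjc lam *: (A (m + j)%N *m (A (m + j)%N.+1 *m nth 0 s j.+2)).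
Proof. by rewrite /Sl -!addnS !xs_at. Qed.

Lemma Phi_ineq lam m s : hyponormal (Tl A lam) -> size s = 5%N ->
  0 <= \sum_(i < 7) vinner (Tl A lam (xs m s) (m + i)%N) (Tl A lam (xs m s) (m + i)%N)
     - \sum_(i < 5) vinner (Sl A lam (xs m s) (m + i)%N) (Sl A lam (xs m s) (m + i)%N).
Proof.
move=> hyp sz.
have sx : supp (m.+3).+2 (xs m s) by move=> k Hk; apply: xs_supp; rewrite sz; lia.
have := hypo_ineq Aherm hyp sx.
have -> : (m.+3).+4 = (m + 7)%N by lia.
have -> : (m.+3).+2 = (m + 5)%N by lia.
rewrite !ip_win.
have -> : ip m (Tl A lam (xs m s)) (Tl A lam (xs m s)) = 0.
  rewrite /ip big1 // => k _.
  have hk : (k < m)%N := ltn_ord k.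
  have h1 := @xs_low m s.
  have h2 := T_low h1.
  have h3 : forall j, (j < m)%N -> T (xs m s) j = 0 by move=> j Hj; apply: h2; exact: ltnW.
  by rewrite /Tl (h2 _ (ltnW hk)) (T_low h3 (ltnW hk)) scaler0 addr0 vinner0l.
have h0 : 0 <= ip m (Sl A lam (xs m s)) (Sl A lam (xs m s)).
  by apply: sumr_ge0 => k _; rewrite vinner_sq ler0c vsqnorm_ge0.
rewrite add0r => H; apply: le_trans H _.
by rewrite lerB // lerDr.
Qed.

End Win.

Section Alg.
Variables (R : realType) (p : nat).

Lemma Phi_alg (Y a1 a2 a3 k1 k2 m1 l1 h1 ak2 : 'cV[R[i]]_p) (E : R[i])
  (hE : conjc E = E)
  (r1 : vinner a1 a3 = vinner a2 a2) (r2 : vinner a3 a1 = vinner a2 a2)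
  (r3 : vinner a1 ak2 = vinner a2 k2) (r4 : vinner ak2 a1 = vinner k2 a2) :
  let lam := - E in
  0 <=
  0 +
  (vinner (E ^+ 2 *: a2) (E ^+ 2 *: a2) +
   (vinner (E *: a1 + lam *: (E ^+ 2 *: a3)) (E *: a1 + lam *: (E ^+ 2 *: a3)) +
    (vinner (Y + lam *: (E *: a2)) (Y + lam *: (E *: a2)) +
     (vinner (E *: k1 + lam *: k1) (E *: k1 + lam *: k1) +
      (vinner (E ^+ 2 *: m1 + lam *: (E *: m1)) (E ^+ 2 *: m1 + lam *: (E *: m1)) +
       (vinner (lam *: (E ^+ 2 *: l1)) (lam *: (E ^+ 2 *: l1)) + 0)))))) -
  (vinner (E *: h1 + lam *: h1) (E *: h1 + lam *: h1) +
   (vinner (Y + lam *: (E *: a2)) (Y + lam *: (E *: a2)) +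
    (vinner (E *: a1 + lam *: (E ^+ 2 *: ak2)) (E *: a1 + lam *: (E ^+ 2 *: ak2)) +
     (vinner (E ^+ 2 *: k2) (E ^+ 2 *: k2) + (0 + 0))))) ->
  0 <= - (E ^+ 4 * vinner (k2 - a2) (k2 - a2))
       + E ^+ 6 * (vinner a3 a3 + vinner l1 l1 - vinner ak2 ak2).
Proof.
move=> lam H0; apply: (le_trans H0); rewrite le_eqVlt; apply/orP; left; apply/eqP.
rewrite /lam.
rewrite !(vinnerDl, vinnerDr, vinnerZl, vinnerZr, vinnerBl, vinnerBr, vinnerNl, vinnerNr).
have cN : conjc (- E) = - E by rewrite rmorphN /= hE.
have cX : forall n, conjc (E ^+ n) = E ^+ n by move=> n; rewrite rmorphXn /= hE.
rewrite !cN !cX hE r1 r2 r3 r4.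
ring.
Qed.

Lemma to_real (eps x a b c : R) :
  0 <= - ((eps%:C) ^+ 4 * x%:C) + (eps%:C) ^+ 6 * (a%:C + b%:C - c%:C) ->
  0 <= - (eps ^+ 4 * x) + eps ^+ 6 * (a + b - c).
Proof.
have -> : - ((eps%:C) ^+ 4 * x%:C) + (eps%:C) ^+ 6 * (a%:C + b%:C - c%:C) =
  (- (eps ^+ 4 * x) + eps ^+ 6 * (a + b - c))%:C.
  rewrite [RHS]rmorphD [in RHS]rmorphN.
  rewrite [in RHS](rmorphM _ (eps ^+ 4)) [in RHS](rmorphM _ (eps ^+ 6)).
  by rewrite !rmorphXn rmorphB rmorphD.
by rewrite ler0c.
Qed.

Lemma real_final (x c : R) : 0 <= x ->
  (forall eps : R, 0 < eps -> 0 <= - (eps ^+ 4 * x) + eps ^+ 6 * c) -> x = 0.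
Proof.
move=> x0 h; apply/eqP; rewrite eq_le x0 andbT; rewrite leNgt; apply/negP => xp.
pose eps := x / (`|c| + x + 1).
have d0 : 0 < `|c| + x + 1 by rewrite ltr_wpDl // addr_ge0.
have e0 : 0 < eps by rewrite divr_gt0.
have e1 : eps <= 1 by rewrite ler_pdivrMr // mul1r; have := normr_ge0 c; lra.
have e2 : eps * (`|c| + x + 1) = x by rewrite /eps mulfVK // gt_eqF.
have := h eps e0.
have nc := normr_ge0 c.
have lc := ler_norm c.
have p1 : 0 <= eps ^+ 2 * (`|c| - c) by rewrite mulr_ge0 ?sqr_ge0 // subr_ge0.
have p2 : 0 <= (eps - eps ^+ 2) * `|c|.
  rewrite mulr_ge0 // subr_ge0 expr2 ler_piMr //; exact: ltW.
have hc : eps ^+ 2 * c <= eps * `|c| by nra.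
have hlt : eps ^+ 2 * c < x by nra.
have e4 : 0 < eps ^+ 4 by rewrite exprn_gt0.
have -> : - (eps ^+ 4 * x) + eps ^+ 6 * c = eps ^+ 4 * (eps ^+ 2 * c - x) by ring.
by rewrite pmulr_rge0 // subr_ge0 leNgt hlt.
Qed.

End Alg.

End Aux.
Import Aux.

Theorem mainTheorem5 (R : realType) (p : nat) (A : nat -> 'M[R[i]]_p) :
  (0 < p)%N ->
  (forall n, posmx (A n) /\ A n \in unitmx) ->
  bounded_seq_mx A ->
  quad_hyponormal (mw_shift A) ->
  forall n : nat, (1 <= n)%N -> A n = A n.+1 ->
    (A n.-1 = A n /\ A n = A n.+1) \/ (A n = A n.+1 /\ A n.+1 = A n.+2).
Proof.
move=> _ hA _ hqh n n1 eqn0.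
right; split => //.
have Aherm k : adjmx (A k) = A k := (hA k).1.1.
move: n1 eqn0; case: n => // m _ eqn /=.
symmetry.
apply: (sq_uniq (hA m.+3).1 (hA m.+2).1 (hA m.+2).2).
apply: mx_ext => Y; rewrite -!mulmxA.
set B := A m.+2. set K := A m.+3.
apply/eqP; rewrite -subr_eq0; apply/eqP; apply: vsqnorm_eq0.
apply: (@real_final _ _ (vsqnorm (B *m (B *m (B *m Y))) + vsqnorm (A m.+1.+4 *m (A m.+4 *m (K *m Y)))
  - vsqnorm (B *m (K *m (K *m Y)))) (vsqnorm_ge0 _)) => eps e0.
pose E : R[i] := (eps%:C)%C.
pose z := invmx (A m) *m (B *m (B *m Y)).
pose y := invmx B *m Y.
pose s := [:: E ^+ 2 *: z; E *: Y; y; E *: Y; E ^+ 2 *: (K *m Y)].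
pose lam := - E.
have H0 := @Phi_ineq R p A Aherm lam m s (hqh lam : hyponormal (Tl A lam)) (erefl 5%N).
move: H0.
rewrite !big_ord_recl !big_ord0 /=.
rewrite Tl0 Tl1 !Tl2 !Sl_at.
rewrite !addnS !addn0 /bump /= eqn.
rewrite -/B -/K.
have cl : (Complex (- eps) (- - 0)) = lam.
  by apply/eqP; rewrite eq_complex /= ?opprK ?oppr0 !eqxx.
rewrite cl.
have hz : A m *m z = B *m (B *m Y) by rewrite /z mulKVmx // (hA m).2.
have hy : B *m y = Y by rewrite /y mulKVmx // (hA m.+2).2.
have hB : adjmx B = B := Aherm m.+2.
rewrite -!scalemxAr hz hy !mulmx0 !scaler0.
rewrite !(@addr0 (matrix R[i] p 1)) !(@add0r (matrix R[i] p 1)) !vinner0l.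
move=> H0.
have hE : conjc E = E by rewrite /E conjc_real.
have r1 : vinner (B *m Y) (B *m (B *m (B *m Y))) = vinner (B *m (B *m Y)) (B *m (B *m Y)).
  by rewrite -(vinner_herm _ _ hB).
have r2 : vinner (B *m (B *m (B *m Y))) (B *m Y) = vinner (B *m (B *m Y)) (B *m (B *m Y)).
  by rewrite (vinner_herm _ _ hB).
have r3 : vinner (B *m Y) (B *m (K *m (K *m Y))) = vinner (B *m (B *m Y)) (K *m (K *m Y)).
  by rewrite -(vinner_herm _ _ hB).
have r4 : vinner (B *m (K *m (K *m Y))) (B *m Y) = vinner (K *m (K *m Y)) (B *m (B *m Y)).
  by rewrite (vinner_herm _ _ hB).
have H1 := @Phi_alg R p Y (B *m Y) (B *m (B *m Y)) (B *m (B *m (B *m Y))) (K *m Y) (K *m (K *m Y))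
  (A m.+4 *m (K *m Y)) (A m.+1.+4 *m (A m.+4 *m (K *m Y))) (A m *m Y) (B *m (K *m (K *m Y)))
  E hE r1 r2 r3 r4 H0.
move: H1; rewrite !vinner_sq.
exact: to_real.
Qed.
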